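(* Assume $\mathbb F$ is algebraically closed with $\operatorname{char}\mathbb F=0$, and let $d\in\mathbb N$. If $V$ is a $(d+1)$-dimensional irreducible $\Re$-module, then there exist $a,b,c\in\mathbb F$ such that $R_d(a,b,c)$ is isomorphic to $V$.
   Context: The Racah algebra $\Re$ is the unital associative $\mathbb F$-algebra with generators $A,B,C,D$ and relations $[A,B]=[B,C]=[C,A]=2D$ together with the requirement that each of $\alpha:=[A,D]+AC-BA$, $\beta:=[B,D]+BA-CB$, $\gamma:=[C,D]+CB-AC$ is central in $\Re$; $\delta:=A+B+C$. For $a,b,c\in\mathbb F$ and $d\in\mathbb N$ set $\theta_i=(a+\tfrac d2-i)(a+\tfrac d2-i+1)$, $\theta_i^*=(b+\tfrac d2-i)(b+\tfrac d2-i+1)$, $\varphi_i=i(i-d-1)(a+b+c+\tfrac d2-i+2)(a+b-c+\tfrac d2-i+1)$. $R_d(a,b,c)$ denotes the $(d+1)$-dimensional $\Re$-module with a basis $v_0,\dots,v_d$ such that $Av_i=\theta_iv_i+v_{i+1}$ ($v_{d+1}=0$), $Bv_i=\theta_i^*v_i+\varphi_iv_{i-1}$ ($v_{-1}=0$), and $\alpha,\beta,\delta$ act as the scalars $(c-b)(c+b+1)(a-\tfrac d2)(a+\tfrac d2+1)$, $(a-c)(a+c+1)(b-\tfrac d2)(b+\tfrac d2+1)$, $\tfrac d2(\tfrac d2+1)+a(a+1)+b(b+1)+c(c+1)$ respectively (exists, unique up to isomorphism). *)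

(* Defs.v *)
From HB Require Import structures.
From mathcomp Require Import all_boot all_order all_algebra all_field.
Set Implicit Arguments. Unset Strict Implicit. Unset Printing Implicit Defensive.
Import GRing.Theory.
Local Open Scope ring_scope.

(* A finite-dimensional module over the Racah algebra on F^n, given by the
   matrices (acting on column vectors, v |-> X *m v) of the generators A,B,C,D. *)
Record racah_rep (F : fieldType) (n : nat) := RacahRep {
  rA : 'M[F]_n; rB : 'M[F]_n; rC : 'M[F]_n; rD : 'M[F]_n }.

Section Racah.
Variables (F : fieldType) (n : nat).

Definition comm (X Y : 'M[F]_n) : 'M[F]_n := X *m Y - Y *m X.

Definition ralpha (V : racah_rep F n) : 'M[F]_n :=
  comm (rA V) (rD V) + rA V *m rC V - rB V *m rA V.
Definition rbeta (V : racah_rep F n) : 'M[F]_n :=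
  comm (rB V) (rD V) + rB V *m rA V - rC V *m rB V.
Definition rgamma (V : racah_rep F n) : 'M[F]_n :=
  comm (rC V) (rD V) + rC V *m rB V - rA V *m rC V.
Definition rdelta (V : racah_rep F n) : 'M[F]_n := rA V + rB V + rC V.

Definition commutes_gens (V : racah_rep F n) (X : 'M[F]_n) : Prop :=
  [/\ X *m rA V = rA V *m X, X *m rB V = rB V *m X,
      X *m rC V = rC V *m X & X *m rD V = rD V *m X].

Definition is_racah_module (V : racah_rep F n) : Prop :=
  [/\ comm (rA V) (rB V) = (rD V) *+ 2,
      comm (rB V) (rC V) = (rD V) *+ 2 &
      comm (rC V) (rA V) = (rD V) *+ 2] /\
  [/\ commutes_gens V (ralpha V),
      commutes_gens V (rbeta V) &
      commutes_gens V (rgamma V)].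

(* Irreducible: n > 0 and every subspace (column space of U) invariant
   under A, B, C, D is 0 or everything. *)
Definition racah_irreducible (V : racah_rep F n) : Prop :=
  (0 < n)%N /\
  forall U : 'M[F]_n,
    (((rA V *m U)^T <= U^T)%MS /\ ((rB V *m U)^T <= U^T)%MS /\
     ((rC V *m U)^T <= U^T)%MS /\ ((rD V *m U)^T <= U^T)%MS) ->
    \rank U = 0%N \/ \rank U = n.

Definition racah_iso (V W : racah_rep F n) : Prop :=
  exists2 P : 'M[F]_n, P \in unitmx &
    [/\ P *m rA V = rA W *m P, P *m rB V = rB W *m P,
        P *m rC V = rC W *m P & P *m rD V = rD W *m P].
End Racah.

Section Rd.
Variables (F : fieldType).

Definition half_d (d : nat) : F := d%:R / 2.

Definition theta (a : F) (d i : nat) : F :=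
  (a + half_d d - i%:R) * (a + half_d d - i%:R + 1).

Definition phi (a b c : F) (d i : nat) : F :=
  i%:R * (i%:R - d%:R - 1) * (a + b + c + half_d d - i%:R + 2)
       * (a + b - c + half_d d - i%:R + 1).

(* Matrix of A in the basis v_0..v_d: A v_j = theta_j v_j + v_{j+1}. *)
Definition RdA (a : F) (d : nat) : 'M[F]_d.+1 :=
  \matrix_(i, j) (if i == j then theta a d j
                  else if nat_of_ord i == (nat_of_ord j).+1 then 1 else 0).

(* Matrix of B: B v_j = theta*_j v_j + phi_j v_{j-1}. *)
Definition RdB (a b c : F) (d : nat) : 'M[F]_d.+1 :=
  \matrix_(i, j) (if i == j then theta b d j
                  else if (nat_of_ord i).+1 == nat_of_ord j then phi a b c d j
                  else 0).

Definition alpha_scal (a b c : F) (d : nat) : F :=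
  (c - b) * (c + b + 1) * (a - half_d d) * (a + half_d d + 1).
Definition beta_scal (a b c : F) (d : nat) : F :=
  (a - c) * (a + c + 1) * (b - half_d d) * (b + half_d d + 1).
Definition delta_scal (a b c : F) (d : nat) : F :=
  half_d d * (half_d d + 1) + a * (a + 1) + b * (b + 1) + c * (c + 1).

(* V (on F^(d+1), standard basis = v_0..v_d) is the module R_d(a,b,c). *)
Definition is_Rd (d : nat) (a b c : F) (V : racah_rep F d.+1) : Prop :=
  [/\ is_racah_module V,
      rA V = RdA a d &
      rB V = RdB a b c d] /\
  [/\ ralpha V = (alpha_scal a b c d)%:M,
      rbeta V = (beta_scal a b c d)%:M &
      rdelta V = (delta_scal a b c d)%:M].
End Rd.
Arguments is_Rd {F} d a b c V.

(* Main.v *)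
Set Warnings "-notation-overridden,-ambiguous-paths,-deprecated-syntactic-definition-since-mathcomp-2.4.0".
Require Import Defs.
From HB Require Import structures.
From mathcomp Require Import all_boot all_order all_algebra all_field.
From mathcomp Require Import ring zify.
Set Implicit Arguments. Unset Strict Implicit. Unset Printing Implicit Defensive.
Import GRing.Theory.
Local Open Scope ring_scope.

Lemma lin_solve (F : comNzRingType) (e c l r : F) : l = r -> l - r = e - c -> e = c.
Proof. by move=> -> /eqP; rewrite subrr eq_sym subr_eq0 => /eqP. Qed.

Section Flag.
Variables (F : fieldType) (n : nat) (K T : 'M[F]_n) (dl k1 : F).
Hypothesis HKT : K *m K *m T - 2 *: (K *m T *m K) + T *m K *m K
   = 2 *: (K *m K + K *m T + T *m K - dl *: K + k1%:M).

Lemma step_abs (g1 g2 g3 u0 u1 E : 'rV[F]_n) (t0 t1 m0 m1 m2 : F) :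
  m2 = 2 + 2 * m1 - m0 ->
  g1 *m K = t0 *: g1 + g2 -> g2 *m K = t1 *: g2 + g3 ->
  g1 *m T = m0 *: g1 + u0 -> g2 *m T = m1 *: g2 + u1 -> g3 *m T = m2 *: g3 + E ->
  E = (2 * (t0 * t0 + 2 * t0 * m0 - dl * t0 + k1)) *: g1
      + (2 * (t0 + t1 + m0 + m1 - dl) - (t0 - t1) * (m1 - m0)) *: g2
      + (2 * t0 - t0 * t0) *: u0 + (2 - t0 - t1) *: u1
      + (2 + 2 * t0) *: (u0 *m K) + 2 *: (u1 *m K) - u0 *m K *m K.
Proof.
move=> hm e1 e2 e3 e4 e5.
have := congr1 (mulmx g1) HKT.
rewrite !mulmxDr !mulmxN !mulmxA -!scalemxAr !mulmxDr !mulmxN !mulmxA -!scalemxAr mul_mx_scalar.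
rewrite ?(e1, e2, e3, e4, e5, mulmxDl, =^~scalemxAl, scalerDr, scalerA).
move: (u0 *m K *m K) => w; move: (u0 *m K) (u1 *m K) => x0 x1 H.
apply/rowP => j; have := congr1 (fun M : 'rV_n => M 0 j) H; rewrite !mxE => {}H.
apply: lin_solve H _; rewrite hm; ring.
Qed.

Variables (kap tau : nat -> F) (v0 : 'rV[F]_n).
Hypothesis Htau : forall i, tau i.+2 = 2 + 2 * tau i.+1 - tau i.

Fixpoint kv i : 'rV[F]_n := if i is i'.+1 then kv i' *m K - kap i' *: kv i' else v0.
Definition Sp k : 'M[F]_n := \matrix_(i < n) (if (i < k)%N then kv i else 0).

Lemma row_Sp k (i : 'I_n) : row i (Sp k) = if (i < k)%N then kv i else 0.
Proof. by rewrite rowK. Qed.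

Lemma kv_Sp k i : (i < k)%N -> (i < n)%N -> (kv i <= Sp k)%MS.
Proof. by move=> ik iN; apply: (eq_row_sub (Ordinal iN)); rewrite row_Sp /= ik. Qed.

Lemma Sp_mono k l : (k <= l)%N -> (Sp k <= Sp l)%MS.
Proof.
move=> kl; apply/row_subP => i; rewrite row_Sp; case: ifP => ik; last exact: sub0mx.
by apply: kv_Sp => //; exact: leq_trans ik kl.
Qed.

Lemma Sp0 : Sp 0 = 0.
Proof. by apply/matrixP => i j; rewrite !mxE. Qed.

Lemma kvS i : kv i *m K = kap i *: kv i + kv i.+1.
Proof. by rewrite /= addrC subrK. Qed.

Lemma Sp_K k : (k < n)%N -> (Sp k *m K <= Sp k.+1)%MS.
Proof.
move=> kn; apply/row_subP => i; rewrite row_mul row_Sp.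
case: ifP => ik; last by rewrite mul0mx sub0mx.
rewrite kvS; apply: addmx_sub; last by apply: kv_Sp => //; exact: leq_ltn_trans ik kn.
by apply: scalemx_sub; apply: kv_Sp; [exact: ltnW | exact: ltn_trans ik kn].
Qed.

Lemma sub_K (u : 'rV[F]_n) k : (u <= Sp k)%MS -> (k < n)%N -> (u *m K <= Sp k.+1)%MS.
Proof. by move=> uk kn; apply: submx_trans (submxMr K uk) (Sp_K kn). Qed.

Definition Qtri m := forall k, (k < m)%N -> (k < n)%N -> (kv k *m T - tau k *: kv k <= Sp k)%MS.

Lemma Sp_T m : Qtri m -> (Sp m *m T <= Sp m)%MS.
Proof.
move=> Q; apply/row_subP => i; rewrite row_mul row_Sp.
case: ifP => im; last by rewrite mul0mx sub0mx.
rewrite -(subrK (tau i *: kv i) (kv i *m T)); apply: addmx_sub.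
  by apply: submx_trans (Q _ im (ltn_ord i)) (Sp_mono (ltnW im)).
by apply: scalemx_sub; apply: kv_Sp.
Qed.

Lemma sub_T (u : 'rV[F]_n) m : (u <= Sp m)%MS -> Qtri m -> (u *m T <= Sp m)%MS.
Proof. by move=> um Q; apply: submx_trans (submxMr T um) (Sp_T Q). Qed.

Lemma Qtri_step i : (i.+2 < n)%N -> Qtri i.+2 -> Qtri i.+3.
Proof.
move=> iN Q k; rewrite ltnS leq_eqVlt => /orP[/eqP -> _|]; last exact: Q.
have i1N : (i.+1 < n)%N by exact: ltn_trans iN.
have i0N : (i < n)%N by exact: ltn_trans i1N.
have Q0 := Q i (ltnW (ltnSn _)) i0N.
have Q1 := Q i.+1 (ltnSn _) i1N.
have E0 : kv i *m T = tau i *: kv i + (kv i *m T - tau i *: kv i) by rewrite addrC subrK.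
have E1 : kv i.+1 *m T = tau i.+1 *: kv i.+1 + (kv i.+1 *m T - tau i.+1 *: kv i.+1)
  by rewrite addrC subrK.
have E2 : kv i.+2 *m T = tau i.+2 *: kv i.+2 + (kv i.+2 *m T - tau i.+2 *: kv i.+2)
  by rewrite addrC subrK.
rewrite (step_abs (Htau i) (kvS i) (kvS i.+1) E0 E1 E2).
have S02 : (Sp i <= Sp i.+2)%MS by apply: Sp_mono; exact: leqW.
have S12 : (Sp i.+1 <= Sp i.+2)%MS by apply: Sp_mono.
repeat apply: addmx_sub; try apply: scalemx_sub.
- by apply: kv_Sp.
- by apply: kv_Sp.
- exact: submx_trans Q0 S02.
- exact: submx_trans Q1 S12.
- by apply: submx_trans (sub_K Q0 i0N) S12.
- by apply: sub_K.
- rewrite -scaleN1r; apply: scalemx_sub; apply: sub_K => //; exact: sub_K.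
Qed.

Hypothesis H0 : v0 *m T = tau 0 *: v0.
Hypothesis H1 : exists c, kv 1 *m T - tau 1 *: kv 1 = c *: v0.

Lemma Qtri_all m : Qtri m.
Proof.
elim: m => [k //|m IH] k; rewrite ltnS leq_eqVlt => /orP[/eqP ->|]; last exact: IH.
case: m IH => [|[|i]] IH mN.
- by rewrite /= H0 subrr sub0mx.
- by case: H1 => c ->; apply: scalemx_sub; apply: (@kv_Sp 1 0) => //; exact: ltn_trans mN.
- exact: (Qtri_step mN IH).
Qed.

Lemma Sp_split k : (Sp k.+1 <= Sp k + kv k)%MS.
Proof.
apply/row_subP => i; rewrite row_Sp; case: ifP => ik; last exact: sub0mx.
move: ik; rewrite ltnS leq_eqVlt => /orP[/eqP ->|ik]; first exact: addsmxSr.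
by apply: submx_trans (addsmxSl _ _); apply: kv_Sp.
Qed.

Lemma rank_Sp k : (\rank (Sp k) <= k)%N.
Proof.
elim: k => [|k IH]; first by rewrite Sp0 mxrank0.
apply: leq_trans (mxrankS (Sp_split k)) _.
apply: leq_trans (mxrank_adds_leqif _ _) _.
by rewrite -(addn1 k); exact: leq_add IH (rank_leq_row _).
Qed.

Lemma Sp_dec (u : 'rV[F]_n) k : (u <= Sp k.+1)%MS -> exists c, (u - c *: kv k <= Sp k)%MS.
Proof.
move/(submx_trans)/(_ (Sp_split k)) => /sub_addsmxP[[a b] /= ->].
exists (b 0 0).
have -> : b *m kv k = b 0 0 *: kv k by rewrite {1}[b]mx11_scalar mul_scalar_mx.
by rewrite addrK; exact: submxMl.
Qed.

Lemma Sp_lower (z : 'rV[F]_n) m : (m < n)%N -> (z <= Sp m.+1)%MS ->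
  (z *m (T - (tau m)%:M) <= Sp m)%MS.
Proof.
move=> mn /Sp_dec[c hc]; rewrite -(subrK (c *: kv m) z) mulmxDl; apply: addmx_sub.
  rewrite mulmxBr mul_mx_scalar; apply: addmx_sub; first exact: sub_T hc (@Qtri_all m).
  by rewrite -scaleNr; apply: scalemx_sub.
by rewrite -scalemxAl; apply: scalemx_sub; rewrite mulmxBr mul_mx_scalar; exact: Qtri_all.
Qed.

Hypothesis Hirr : forall S : 'M[F]_n, (S *m K <= S)%MS -> (S *m T <= S)%MS ->
  \rank S = 0%N \/ \rank S = n.
Hypothesis v0nz : v0 != 0.

Lemma notin k : (k < n)%N -> ~~ (kv k <= Sp k)%MS.
Proof.
move=> kn; apply/negP => Hk.
have invK : (Sp k *m K <= Sp k)%MS.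
  apply/row_subP => i; rewrite row_mul row_Sp; case: ifP => ik; last by rewrite mul0mx sub0mx.
  rewrite kvS; apply: addmx_sub; first by apply: scalemx_sub; apply: kv_Sp.
  case: (ltnP i.+1 k) => h; first by apply: kv_Sp => //; exact: ltn_trans h kn.
  by have -> : i.+1 = k by apply/eqP; rewrite eqn_leq h ik.
case: (Hirr invK (Sp_T (@Qtri_all k))) => [/eqP|hr].
  rewrite mxrank_eq0 => /eqP S0; move: v0nz; apply/negP/negPn; clear invK.
  case: k kn Hk S0 => [|k] kn Hk S0; first by move: Hk; rewrite S0 submx0.
  apply/eqP; apply: (@submx0null _ 1 n n); rewrite -S0; exact: (@kv_Sp k.+1 0 (ltn0Sn _) (ltn_trans (ltn0Sn k) kn)).
by move: (rank_Sp k); rewrite hr leqNgt kn.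
Qed.

Lemma rank_Sp_eq k : (k <= n)%N -> \rank (Sp k) = k.
Proof.
elim: k => [|k IH] kn; first by rewrite Sp0 mxrank0.
apply/eqP; rewrite eqn_leq rank_Sp /=.
have lt : (Sp k < Sp k.+1)%MS.
  rewrite ltmxE Sp_mono //=; apply/negP => h; move: (notin kn); rewrite (submx_trans _ h) //.
  exact: kv_Sp.
by move: (rank_ltmx lt); rewrite IH // ltnW.
Qed.

Lemma Sp_full (u : 'rV[F]_n) : (u <= Sp n)%MS.
Proof. by apply: submx_full; rewrite /row_full rank_Sp_eq. Qed.
End Flag.

Definition th (F : fieldType) (u : F) := u * (u + 1).

Section Lowest.
Variables (F : fieldType) (n : nat) (K T : 'M[F]_n) (dl k2 : F).
Hypothesis HTK : T *m T *m K - 2 *: (T *m K *m T) + K *m T *m T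
   = 2 *: (T *m T + T *m K + K *m T - dl *: T + k2%:M).

Lemma lowest (v0 : 'rV[F]_n) (y kap0 : F) :
  v0 != 0 -> v0 *m T = th y *: v0 -> ~~ eigenvalue T (th (y + 1)) ->
  exists c, (v0 *m K - kap0 *: v0) *m T - th (y - 1) *: (v0 *m K - kap0 *: v0) = c *: v0.
Proof.
move=> v0nz e0 noeig.
have hne : th y - th (y + 1) != 0.
  apply/negP => /eqP h; move/negP: noeig; apply; apply/eigenvalueP; exists v0 => //.
  by rewrite e0; congr (_ *: _); apply/eqP; rewrite -subr_eq0 h.
set w := v0 *m K.
set c' := 2 * (th y * th y - dl * th y + k2) / (th y - th (y + 1)).
have R := congr1 (mulmx v0) HTK.
rewrite !mulmxDr !mulmxN !mulmxA -!scalemxAr !mulmxDr !mulmxN !mulmxA -!scalemxAr mul_mx_scalar in R.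
rewrite !e0 -!scalemxAl !e0 -!scalemxAl !scalerA -/w in R.
set z := w *m T - th (y - 1) *: w - c' *: v0.
have ez : z *m T = th (y + 1) *: z.
  rewrite /z !mulmxDl !mulNmx -!scalemxAl e0.
  move: (w *m T *m T) (w *m T) R => wTT wT R.
  apply/rowP => j; have := congr1 (fun M : 'rV_n => M 0 j) R; rewrite !mxE => {}R.
  apply: lin_solve R _; rewrite /c' /th; field.
  by move: hne; rewrite /th.
have z0 : z = 0.
  apply/eqP; apply: contraNT noeig => zn; apply/eigenvalueP; exists z => //.
exists (c' - kap0 * (th y - th (y - 1))).
rewrite mulmxDl mulNmx -scalemxAl e0.
have hz : w *m T = th (y - 1) *: w + c' *: v0.
  by move/eqP: z0; rewrite /z subr_eq0 => /eqP <-; rewrite addrC subrK.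
rewrite hz; apply/rowP => j; rewrite !mxE; ring.
Qed.
End Lowest.

Section Extremal.
Variables (F : closedFieldType).
Hypothesis charF0 : [pchar F] =i pred0.

Lemma natF_inj (i j : nat) : i%:R = j%:R :> F -> i = j.
Proof.
have h := (pcharf0P F).1 charF0.
wlog ij : i j / (i <= j)%N => [hw|].
  by case: (leqP i j) => [/hw//|/ltnW /hw hji /esym /hji ->].
by move=> e; apply/eqP; rewrite eqn_leq ij /= -subn_eq0 -h natrB // e subrr eqxx.
Qed.

Lemma extremal n (M : 'M[F]_n) : (0 < n)%N ->
  exists y : F, exists2 v : 'rV_n, v != 0 & v *m M = th y *: v /\ ~~ eigenvalue M (th (y + 1)).
Proof.
move=> n0.
set p := char_poly M.
set q : {poly F} := 'X^2 + 'X.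
have sq : size q = 3%N.
  by rewrite /q size_polyDl ?size_polyXn ?size_polyX.
set P := p \Po q.
have Pz : P != 0.
  rewrite /P comp_poly_eq0 ?sq //; apply/eqP => p0.
  by move: (size_char_poly M); rewrite -/p p0 size_poly0.
have PE u : P.[u] = p.[th u] by rewrite /P horner_comp /q !hornerE /th; congr (p.[_]); ring.
have [u0 ru0] : exists u, root P u.
  have [l rl] : exists l, root p l.
    by apply/closed_rootP; rewrite size_char_poly eqSS -lt0n.
  have [u ru] : exists u, root ('X^2 + 'X - l%:P) u.
    apply/closed_rootP; rewrite size_addl ?size_polyC ?sq //.
    by rewrite size_polyN size_polyC; case: (l == 0).
  exists u; move: ru rl; rewrite /root PE !hornerE => /eqP h.
  by have -> : th u = l by rewrite /th; apply/eqP; rewrite -subr_eq0 -h; apply/eqP; ring.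
have gen N : (forall k, (k < N)%N -> root P (u0 + k%:R)) \/ (exists u, root P u && ~~ root P (u + 1)).
  elim: N => [|N [IH|IH]]; [by left | | by right].
  case rN : (root P (u0 + N%:R)).
    by left => k; rewrite ltnS leq_eqVlt => /orP[/eqP ->//|]; apply: IH.
  case: N IH rN => [|N] IH rN; first by move: rN; rewrite addr0 ru0.
  by right; exists (u0 + N%:R); rewrite -addrA natr1 rN IH.
have [allr|[y /andP[ry nry]]] := gen (size P).
  have H := max_poly_roots Pz (rs := [seq u0 + k%:R | k <- iota 0 (size P)]).
  suff : (size [seq (u0 + k%:R)%R | k <- iota 0 (size P)] < size P)%N.
    by rewrite size_map size_iota ltnn.
  apply: H.
  - by apply/allP => x /mapP[k]; rewrite mem_iota add0n => /andP[_ kP] ->; apply: allr.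
  - rewrite map_inj_uniq ?iota_uniq // => i j /addrI; exact: natF_inj.
exists y.
have : eigenvalue M (th y) by rewrite eigenvalue_root_char -/p /root -PE.
move/eigenvalueP => [v ev vnz]; exists v => //; split => //.
by rewrite eigenvalue_root_char -/p /root -PE.
Qed.
End Extremal.

Section Split.
Variables (F : fieldType) (d : nat).
Local Notation n := d.+1.
Variables (a b : 'M[F]_n) (dl ka kb : F).
Hypothesis Ha : a *m a *m b - 2 *: (a *m b *m a) + b *m a *m a
   = 2 *: (a *m a + a *m b + b *m a - dl *: a + ka%:M).
Hypothesis Hb : b *m b *m a - 2 *: (b *m a *m b) + a *m b *m b
   = 2 *: (b *m b + b *m a + a *m b - dl *: b + kb%:M).
Variables (kapv tauv kapw tauw : nat -> F) (v0 : 'rV[F]_n).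
Hypothesis Htauv : forall i, tauv i.+2 = 2 + 2 * tauv i.+1 - tauv i.
Hypothesis Htauw : forall i, tauw i.+2 = 2 + 2 * tauw i.+1 - tauw i.
Local Notation v := (kv a kapv v0).
Local Notation w0 := (kv a kapv v0 d).
Local Notation w := (kv b kapw w0).
Local Notation Sv := (Sp a kapv v0).
Local Notation Sw := (Sp b kapw w0).
Hypothesis H0v : v0 *m b = tauv 0 *: v0.
Hypothesis H1v : exists c, v 1 *m b - tauv 1 *: v 1 = c *: v0.
Hypothesis H0w : w0 *m a = tauw 0 *: w0.
Hypothesis H1w : exists c, w 1 *m a - tauw 1 *: w 1 = c *: w0.
Hypothesis Hirr : forall S : 'M[F]_n, (S *m a <= S)%MS -> (S *m b <= S)%MS ->
  \rank S = 0%N \/ \rank S = n.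
Hypothesis v0nz : v0 != 0.
Hypothesis w0nz : w0 != 0.
Hypothesis Hkw : forall k, (k <= d)%N -> kapw k = tauv (d - k).
Hypothesis Hkv : forall k, (k <= d)%N -> kapv k = tauw (d - k).

Let Hirrw : forall S : 'M[F]_n, (S *m b <= S)%MS -> (S *m a <= S)%MS ->
  \rank S = 0%N \/ \rank S = n.
Proof. by move=> S h1 h2; apply: Hirr. Qed.

Let lowv := Sp_lower Ha Htauv H0v H1v.
Let loww := Sp_lower Hb Htauw H0w H1w.
Let notinv := notin Ha Htauv H0v H1v Hirr v0nz.
Let notinw := notin Hb Htauw H0w H1w Hirrw w0nz.
Let fullv := Sp_full Ha Htauv H0v H1v Hirr v0nz.
Let fullw := Sp_full Hb Htauw H0w H1w Hirrw w0nz.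

Lemma cross_w k : (k <= n)%N -> (w k <= Sv (n - k))%MS.
Proof.
elim: k => [_|k IH kn]; first by rewrite subn0; exact: (@kv_Sp F n a kapv v0 n d (ltnSn d) (ltnSn d)).
have -> : w k.+1 = w k *m (b - (tauv (d - k))%:M).
  by rewrite /= mulmxBr mul_mx_scalar Hkw.
have -> : (n - k.+1 = d - k)%N by lia.
apply: lowv; first lia.
have -> : (d - k).+1 = (n - k)%N by lia.
exact: IH (ltnW kn).
Qed.

Lemma cross_v k : (k <= n)%N -> (v k <= Sw (n - k))%MS.
Proof.
elim: k => [_|k IH kn]; first by rewrite subn0; apply: fullw.
have -> : v k.+1 = v k *m (a - (tauw (d - k))%:M).
  by rewrite /= mulmxBr mul_mx_scalar Hkv.
have -> : (n - k.+1 = d - k)%N by lia.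
apply: loww; first lia.
have -> : (d - k).+1 = (n - k)%N by lia.
exact: IH (ltnW kn).
Qed.

Definition Xm (m : nat) := (Sv m :&: Sw (n - m))%MS.

Lemma Xm0 m : (m <= n)%N -> (Xm m <= (0 : 'M_n))%MS.
Proof.
set Y := (\sum_(m < n.+1) Xm m)%MS.
have XY (m' : nat) : (m' <= n)%N -> (Xm m' <= Y)%MS.
  by move=> hm; apply: (sumsmx_sup (Ordinal (hm : (m' < n.+1)%N))).
have rows (m' : 'I_n.+1) (r : 'I_n) :
    (row r (Xm m') <= Sv m')%MS /\ (row r (Xm m') <= Sw (n - m'))%MS.
  by move: (row_sub r (Xm m')); rewrite sub_capmx => /andP.
have invA : (Y *m a <= Y)%MS.
  rewrite sumsmxMr; apply/sumsmx_subP => m' _; apply/row_subP => r; rewrite row_mul.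
  have [zv zw] := rows m' r; set z := row r (Xm m') in zv zw *.
  have zY : (z <= Y)%MS by apply: submx_trans (row_sub _ _) (XY _ (ltn_ord m')).
  case: (ltnP m' n) => hm; last first.
    have e : (n - m' = 0)%N by lia.
    by move: zw; rewrite e Sp0 => /submx0null ->; rewrite mul0mx sub0mx.
  rewrite -(subrK (kapv m' *: z) (z *m a)); apply: addmx_sub; last exact: scalemx_sub.
  have -> : z *m a - kapv m' *: z = z *m (a - (tauw (d - m'))%:M).
    by rewrite mulmxBr mul_mx_scalar Hkv //; lia.
  apply: submx_trans (XY m'.+1 hm); rewrite sub_capmx; apply/andP; split.
    rewrite mulmxBr mul_mx_scalar; apply: addmx_sub.
      exact: sub_K zv hm.
    by rewrite -scaleNr; apply: scalemx_sub; apply: submx_trans zv (Sp_mono _ _ _ (leqnSn _)).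
  have -> : (n - m'.+1 = d - m')%N by lia.
  apply: loww; first lia.
  by have -> : (d - m').+1 = (n - m')%N by lia.
have invB : (Y *m b <= Y)%MS.
  rewrite sumsmxMr; apply/sumsmx_subP => m' _; apply/row_subP => r; rewrite row_mul.
  have [zv zw] := rows m' r; set z := row r (Xm m') in zv zw *.
  have zY : (z <= Y)%MS by apply: submx_trans (row_sub _ _) (XY _ (ltn_ord m')).
  case: (posnP m') => hm0.
    by move: zv; rewrite hm0 Sp0 => /submx0null ->; rewrite mul0mx sub0mx.
  have hm := ltn_ord m'.
  move: zv zw hm; have -> : (m' : nat) = m'.-1.+1 by rewrite prednK.
  move: m'.-1 => mm zv zw hm.
  rewrite -(subrK (tauv mm *: z) (z *m b)); apply: addmx_sub; last exact: scalemx_sub.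
  have -> : z *m b - tauv mm *: z = z *m (b - (tauv mm)%:M) by rewrite mulmxBr mul_mx_scalar.
  apply: submx_trans (XY mm _); last lia.
  rewrite sub_capmx; apply/andP; split; first by apply: lowv => //; lia.
  rewrite mulmxBr mul_mx_scalar; apply: addmx_sub.
    have -> : (n - mm = (n - mm.+1).+1)%N by lia.
    by apply: sub_K zw _; lia.
  rewrite -scaleNr; apply: scalemx_sub; apply: submx_trans zw (Sp_mono _ _ _ _); lia.
have YS : (Y <= Sw d)%MS.
  apply/sumsmx_subP => m' _; case: m' => [[|mm] hm] /=.
    by rewrite /Xm Sp0; apply: submx_trans (capmxSl _ _) (sub0mx _ _).
  apply: submx_trans (capmxSr _ _) (Sp_mono _ _ _ _); lia.
have Y0 : Y = 0.
  case: (Hirr invA invB) => [/eqP|hr]; first by rewrite mxrank_eq0 => /eqP.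
  have := mxrankS YS; rewrite hr (rank_Sp_eq Hb Htauw H0w H1w Hirrw w0nz (leqnSn _)).
  by rewrite ltnn.
by move=> hm; rewrite -Y0; apply: XY.
Qed.

Lemma wv i : (i < n)%N -> exists2 l, l != 0 & w (d - i) = l *: v i.
Proof.
move=> iN.
have h1 : (w (d - i) <= Sv i.+1)%MS.
  by have := cross_w (k := d - i) (leq_trans (leq_subr _ _) (leqnSn _)); have -> : (n - (d - i) = i.+1)%N by lia.
have [l hl] := Sp_dec h1.
have h2 : (w (d - i) - l *: v i <= Sw (n - i))%MS.
  apply: addmx_sub.
    by apply: kv_Sp; lia.
  by rewrite -scaleNr; apply: scalemx_sub; apply: cross_v; lia.
have : (w (d - i) - l *: v i <= (0 : 'M_n))%MS by apply: submx_trans (Xm0 (ltnW iN)); rewrite sub_capmx hl h2.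
rewrite submx0 subr_eq0 => /eqP e; exists l => //.
apply/negP => /eqP l0; have hdi : (d - i < n)%N by lia.
by move: (notinw hdi); rewrite e l0 scale0r sub0mx.
Qed.
End Split.

Lemma lin_comb3 (F : comNzRingType) (e c l1 r1 l2 r2 l3 r3 k1 k2 k3 : F) :
  l1 = r1 -> l2 = r2 -> l3 = r3 ->
  e - c = k1 * (l1 - r1) + k2 * (l2 - r2) + k3 * (l3 - r3) -> e = c.
Proof.
move=> -> -> -> /eqP; rewrite !subrr !mulr0 !addr0 subr_eq0 => /eqP //.
Qed.

Section RowRels.
Variables (F : fieldType) (n : nat) (a b c dd : 'M[F]_n) (al be de : F).
Hypothesis hc1 : b *m a - a *m b = dd *+ 2.
Hypothesis hal : dd *m a - a *m dd + c *m a - a *m b = al%:M.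
Hypothesis hbe : dd *m b - b *m dd + a *m b - b *m c = be%:M.
Hypothesis hde : a + b + c = de%:M.

Let ec : c = de%:M - a - b.
Proof.
apply/matrixP => i j; have := congr1 (fun M : 'M_n => M i j) hde; rewrite !mxE => h.
by rewrite -h; ring.
Qed.

Lemma rowR1 : a *m a *m b - 2 *: (a *m b *m a) + b *m a *m a
   = 2 *: (a *m a + a *m b + b *m a - de *: a + al%:M).
Proof.
have h1 := congr1 (mulmx a) hc1; have h2 := congr1 (mulmx^~ a) hc1.
move: hal; rewrite ec.
rewrite !mulmxBr !mulmxA mulr2n mulmxDr in h1.
rewrite !mulmxBl mulr2n mulmxDl in h2.
rewrite !mulmxBl !mul_scalar_mx => h3.
move: (a *m a *m b) (a *m b *m a) (b *m a *m a) (a *m dd) (dd *m a) (a *m a) (a *m b) (b *m a) h1 h2 h3.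
move=> X1 X2 X3 Y1 Y2 Z1 Z2 Z3 h1 h2 h3.
apply/matrixP => i j.
move: (congr1 (fun M : 'M_n => M i j) h1) (congr1 (fun M : 'M_n => M i j) h2)
      (congr1 (fun M : 'M_n => M i j) h3); rewrite !mxE => {}h1 {}h2 {}h3.
apply: (lin_comb3 h1 h2 h3 (k1 := -1) (k2 := 1) (k3 := 2)); ring.
Qed.

Lemma rowR2 : b *m b *m a - 2 *: (b *m a *m b) + a *m b *m b
   = 2 *: (b *m b + b *m a + a *m b - de *: b + (- be)%:M).
Proof.
have h1 := congr1 (mulmx b) hc1; have h2 := congr1 (mulmx^~ b) hc1.
move: hbe; rewrite ec.
rewrite !mulmxBr !mulmxA mulr2n mulmxDr in h1.
rewrite !mulmxBl mulr2n mulmxDl in h2.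
rewrite !mulmxBr !mul_mx_scalar => h3.
move: (b *m b *m a) (b *m a *m b) (a *m b *m b) (b *m dd) (dd *m b) (b *m b) (a *m b) (b *m a) h1 h2 h3.
move=> X1 X2 X3 Y1 Y2 Z1 Z2 Z3 h1 h2 h3.
apply/matrixP => i j.
move: (congr1 (fun M : 'M_n => M i j) h1) (congr1 (fun M : 'M_n => M i j) h2)
      (congr1 (fun M : 'M_n => M i j) h3); rewrite !mxE => {}h1 {}h2 {}h3.
apply: (lin_comb3 h1 h2 h3 (k1 := 1) (k2 := -1) (k3 := -2)); ring.
Qed.
End RowRels.

Section Schur.
Variables (F : closedFieldType) (n : nat) (a b c dd : 'M[F]_n).
Hypothesis n0 : (0 < n)%N.
Hypothesis Hirr4 : forall S : 'M[F]_n, (S *m a <= S)%MS -> (S *m b <= S)%MS ->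
  (S *m c <= S)%MS -> (S *m dd <= S)%MS -> \rank S = 0%N \/ \rank S = n.

Lemma schur (M : 'M[F]_n) : M *m a = a *m M -> M *m b = b *m M ->
  M *m c = c *m M -> M *m dd = dd *m M -> exists l, M = l%:M.
Proof.
move=> ca cb cc cd.
have [l] : exists l, root (char_poly M) l.
  by apply/closed_rootP; rewrite size_char_poly eqSS -lt0n.
rewrite -eigenvalue_root_char /eigenvalue /eigenspace => nz.
set E := kermx (M - l%:M) in nz.
have inv X : M *m X = X *m M -> (E *m X <= E)%MS.
  move=> cX; apply/sub_kermxP.
  have e : X *m (M - l%:M) = (M - l%:M) *m X.
    by rewrite mulmxBr mulmxBl mul_mx_scalar mul_scalar_mx cX.
  by rewrite -mulmxA e mulmxA mulmx_ker mul0mx.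
case: (Hirr4 (inv _ ca) (inv _ cb) (inv _ cc) (inv _ cd)) => [/eqP|hr].
  by rewrite mxrank_eq0 (negbTE nz).
exists l; apply/eqP; rewrite -subr_eq0 -mxrank_eq0.
move: hr; rewrite /E mxrank_ker => h.
move: (rank_leq_row (M - l%:M)) => hle; apply/eqP; change (\rank (M - l%:M) = 0%N); lia.
Qed.
End Schur.

Lemma eq_diff (F : comNzRingType) (x y x' y' : F) : x' = y' -> x - y = x' - y' -> x = y.
Proof. by move=> -> /eqP; rewrite subrr subr_eq0 => /eqP. Qed.

Section Coef.
Variables (F : fieldType) (n : nat) (K T : 'M[F]_n) (dl k1 k2 : F).

Lemma coef_R1 (g0 g1 g2 p0 : 'rV[F]_n) (j : 'I_n)
    (t0 t1 m0 m1 m2 ph0 ph1 ph2 k' c0 c1 c2 cp : F) :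
  K *m K *m T - 2 *: (K *m T *m K) + T *m K *m K
    = 2 *: (K *m K + K *m T + T *m K - dl *: K + k1%:M) ->
  g0 *m K = t0 *: g0 + g1 -> g1 *m K = t1 *: g1 + g2 ->
  g0 *m T = m0 *: g0 + p0 -> g1 *m T = m1 *: g1 + ph1 *: g0 -> g2 *m T = m2 *: g2 + ph2 *: g1 ->
  p0 *m K = k' *: p0 + ph0 *: g0 ->
  g0 0 j = c0 -> g1 0 j = c1 -> g2 0 j = c2 -> p0 0 j = cp ->
  (t0 * t0 * (m0 * c0 + cp) + (t0+t1) * (m1 * c1 + ph1 * c0) + (m2 * c2 + ph2 * c1))
  - 2 * (t0 * m0 * (t0 * c0 + c1) + t0 * (k'*cp + ph0 * c0) + m1 * (t1 * c1 + c2) + ph1 * (t0 * c0 + c1))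
  + (m0 * (t0 * t0 * c0 + (t0+t1) * c1 + c2) + k'*(k'*cp + ph0 * c0) + ph0 * (t0 * c0 + c1))
  = 2 * ((t0 * t0 * c0 + (t0+t1) * c1 + c2) + (t0 * (m0 * c0 + cp) + m1 * c1 + ph1 * c0)
       + (m0 * (t0 * c0+c1) + k'*cp + ph0 * c0) - dl * (t0 * c0 + c1) + k1 * c0).
Proof.
move=> HKT e1 e2 e3 e4 e5 e6 h0 h1 h2 hp.
have := congr1 (mulmx g0) HKT.
rewrite !mulmxDr !mulmxN !mulmxA -!scalemxAr !mulmxDr !mulmxN !mulmxA -!scalemxAr mul_mx_scalar.
rewrite ?(e1, e2, e3, e4, e5, e6, mulmxDl, =^~scalemxAl, scalerDr, scalerA).
move=> H; have := congr1 (fun M : 'rV_n => M 0 j) H; rewrite !mxE h0 h1 h2 hp => {}H.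
by apply: (eq_diff H); ring.
Qed.

Lemma coef_R2 (g0 g1 : 'rV[F]_n) (j : 'I_n) (t0 m0 m1 ph1 c0 c1 : F) :
  T *m T *m K - 2 *: (T *m K *m T) + K *m T *m T
    = 2 *: (T *m T + T *m K + K *m T - dl *: T + k2%:M) ->
  g0 *m T = m0 *: g0 -> g0 *m K = t0 *: g0 + g1 -> g1 *m T = m1 *: g1 + ph1 *: g0 ->
  g0 0 j = c0 -> g1 0 j = c1 ->
  m0 * m0 * (t0 * c0 + c1) - 2 * (m0 * (t0 * m0 * c0 + m1 * c1 + ph1 * c0))
  + (t0 * m0 * m0 * c0 + m1 * (m1 * c1 + ph1 * c0) + ph1 * m0 * c0)
  = 2 * (m0 * m0 * c0 + m0 * (t0 * c0+c1) + (t0 * m0 * c0 + m1 * c1 + ph1 * c0) - dl * (m0 * c0) + k2 * c0).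
Proof.
move=> HTK e1 e2 e3 h0 h1.
have := congr1 (mulmx g0) HTK.
rewrite !mulmxDr !mulmxN !mulmxA -!scalemxAr !mulmxDr !mulmxN !mulmxA -!scalemxAr mul_mx_scalar.
rewrite ?(e1, e2, e3, mulmxDl, =^~scalemxAl, scalerDr, scalerA).
move=> H; have := congr1 (fun M : 'rV_n => M 0 j) H; rewrite !mxE h0 h1 => {}H.
by apply: (eq_diff H); ring.
Qed.
End Coef.

Section Coords.
Variables (F : fieldType) (d : nat).
Local Notation n := d.+1.

Definition ev k : 'rV[F]_n := \row_(j < n) ((j : nat) == k)%:R.

Lemma ev_ge k : (n <= k)%N -> ev k = 0.
Proof.
move=> nk; apply/rowP => j; rewrite !mxE; case: eqP => // ej.
by move: (ltn_ord j); rewrite ej ltnNge nk.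
Qed.

Lemma ev_row k (hk : (k < n)%N) (M : 'M[F]_n) : ev k *m M = row (Ordinal hk) M.
Proof. by rewrite rowE; congr (_ *m _); apply/rowP => j; rewrite !mxE. Qed.

Lemma ev_entry k (j : 'I_n) : ev k 0 j = ((j : nat) == k)%:R.
Proof. by rewrite mxE. Qed.

Definition Amat (kap : nat -> F) : 'M[F]_n :=
  \matrix_(i, j) (if i == j then kap (j : nat) else if (i : nat) == (j : nat).+1 then 1 else 0).
Definition Bmat (tau ph : nat -> F) : 'M[F]_n :=
  \matrix_(i, j) (if i == j then tau (j : nat) else if (i : nat).+1 == (j : nat) then ph (j : nat) else 0).

Lemma evA kap k : ev k *m (Amat kap)^T = kap k *: ev k + ev k.+1.
Proof.
case: (ltnP k n) => hk; last by rewrite !ev_ge ?mul0mx ?scaler0 ?addr0 //; exact: leqW.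
rewrite ev_row; apply/rowP => j; rewrite !mxE.
have -> : (j == Ordinal hk) = ((j : nat) == k) by [].
case: (eqVneq (j : nat) k) => [->|ne] /=; first by rewrite (ltn_eqF (ltnSn k)) mulr1 addr0.
by rewrite mulr0 add0r; case: (_ == _).
Qed.

Lemma evB tau ph k : ph 0%N = 0 -> ph n = 0 ->
  ev k *m (Bmat tau ph)^T = tau k *: ev k + ph k *: ev k.-1.
Proof.
move=> p0 pn.
case: (ltnP k n) => hk; last first.
  rewrite ev_ge // mul0mx scaler0 add0r.
  move: hk; rewrite leq_eqVlt => /orP[/eqP <-|hk]; first by rewrite pn scale0r.
  by rewrite ev_ge ?scaler0 //; case: k hk => // k; rewrite ltnS.
rewrite ev_row; apply/rowP => j; rewrite !mxE.
have -> : (j == Ordinal hk) = ((j : nat) == k) by [].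
case: (eqVneq (j : nat) k) => [->|ne] /=.
  rewrite mulr1; case: k hk => [|k] hk /=; first by rewrite p0 mul0r addr0.
  by rewrite (gtn_eqF (ltnSn k)) mulr0 addr0.
rewrite mulr0 add0r; case: k hk ne => [|k] hk ne /=.
  by rewrite p0 mul0r.
by rewrite eqSS; case: (eqVneq (j : nat) k) => _; rewrite ?mulr1 ?mulr0.
Qed.
End Coords.

Lemma seq_uniq (F : fieldType) (h : nat -> F) (D : nat) :
  [pchar F] =i pred0 -> h 0%N = 0 -> h D.+1 = 0 ->
  (forall i, (i < D)%N -> h i - 2 * h i.+1 + h i.+2 = 0) ->
  forall i, (i <= D.+1)%N -> h i = 0.
Proof.
move=> ch h0 hD hrec.
have lin : forall i, (i <= D.+1)%N -> h i = i%:R * h 1%N.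
  move=> i; elim: i {-2}i (leqnn i) => [|m IH] i.
    by rewrite leqn0 => /eqP -> _; rewrite h0 mul0r.
  rewrite leq_eqVlt => /orP[/eqP ->|]; last by rewrite ltnS; exact: IH.
  case: m IH => [|m] IH hm; first by rewrite mul1r.
  have e : h m - 2 * h m.+1 + h m.+2 = 0 by apply: hrec; lia.
  have -> : h m.+2 = 2 * h m.+1 - h m by apply/eqP; rewrite -subr_eq0 -e; apply/eqP; ring.
  rewrite (IH m.+1) // ?(IH m) //; try lia.
  by rewrite -!natr1; ring.
have h1 : h 1%N = 0.
  have := lin D.+1 (leqnn _); rewrite hD => /esym /eqP; rewrite mulf_eq0 => /orP[|/eqP //].
  by have := (pcharf0P F).1 ch D.+1; move=> -> .
by move=> i hi; rewrite lin // h1 mulr0.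
Qed.

Section Conj.
Variables (F : fieldType) (n : nat) (P : 'M[F]_n).
Hypothesis Pu : P \in unitmx.
Definition cj (X : 'M[F]_n) := invmx P *m X *m P.
Lemma cjM X Y : cj (X *m Y) = cj X *m cj Y.
Proof. by rewrite /cj !mulmxA mulmxK. Qed.
Lemma cjD X Y : cj (X + Y) = cj X + cj Y.
Proof. by rewrite /cj mulmxDr mulmxDl. Qed.
Lemma cjN X : cj (- X) = - cj X.
Proof. by rewrite /cj mulmxN mulNmx. Qed.
Lemma cjB X Y : cj (X - Y) = cj X - cj Y.
Proof. by rewrite cjD cjN. Qed.
Lemma cjZ (k : F) X : cj (k *: X) = k *: cj X.
Proof. by rewrite /cj -scalemxAr -scalemxAl. Qed.
Lemma cjMn X k : cj (X *+ k) = cj X *+ k.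
Proof. by rewrite -!scaler_nat cjZ. Qed.
Lemma cj_scalar (k : F) : cj k%:M = k%:M.
Proof. by rewrite /cj mul_mx_scalar -scalemxAl mulVmx // scalemx1. Qed.

Definition cjrep (V : racah_rep F n) :=
  RacahRep (cj (rA V)) (cj (rB V)) (cj (rC V)) (cj (rD V)).

Lemma cj_comm X Y : comm (cj X) (cj Y) = cj (comm X Y).
Proof. by rewrite /comm cjB !cjM. Qed.

Lemma cj_alpha V : ralpha (cjrep V) = cj (ralpha V).
Proof. by rewrite /ralpha /comm /= !(cjB, cjD, cjN, cjM). Qed.
Lemma cj_beta V : rbeta (cjrep V) = cj (rbeta V).
Proof. by rewrite /rbeta /comm /= !(cjB, cjD, cjN, cjM). Qed.
Lemma cj_gamma V : rgamma (cjrep V) = cj (rgamma V).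
Proof. by rewrite /rgamma /comm /= !(cjB, cjD, cjN, cjM). Qed.
Lemma cj_delta V : rdelta (cjrep V) = cj (rdelta V).
Proof. by rewrite /rdelta /= !cjD. Qed.

Lemma cj_commutes V X : commutes_gens V X -> commutes_gens (cjrep V) (cj X).
Proof. by case=> h1 h2 h3 h4; split; rewrite /= -!cjM ?h1 ?h2 ?h3 ?h4. Qed.

Lemma cj_module V : is_racah_module V -> is_racah_module (cjrep V).
Proof.
case=> [[e1 e2 e3] [c1 c2 c3]]; split; first by split; rewrite /= cj_comm ?e1 ?e2 ?e3 cjMn.
by split; rewrite ?cj_alpha ?cj_beta ?cj_gamma; apply: cj_commutes.
Qed.

Lemma cj_iso V : racah_iso (cjrep V) V.
Proof. by exists P => //; split; rewrite /= /cj !mulmxA mulmxV // mul1mx. Qed.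
End Conj.

Lemma phi_band (F : fieldType) (a b c : F) d i : (2 : F) != 0 ->
  phi a b c d i - 2 * phi a b c d i.+1 + phi a b c d i.+2
  = 2 * (theta a d i + theta a d i.+1 + theta b d i + theta b d i.+1 - delta_scal a b c d)
    + (theta a d i - theta a d i.+1) * (theta b d i - theta b d i.+1).
Proof. by move=> two; rewrite /phi /theta /delta_scal /half_d -!natr1; field. Qed.

Lemma phi_alpha (F : fieldType) (a b c : F) d : (2 : F) != 0 ->
  (theta a d 1 - theta a d 0) * phi a b c d 1
  = 2 * (theta a d 0 * theta a d 0 + 2 * theta a d 0 * theta b d 0 + phi a b c d 1
         - delta_scal a b c d * theta a d 0 + alpha_scal a b c d).
Proof. by move=> two; rewrite /phi /theta /delta_scal /alpha_scal /half_d; field. Qed.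

Lemma phi_beta (F : fieldType) (a b c : F) d : (2 : F) != 0 ->
  (theta b d 1 - theta b d 0) * phi a b c d 1
  = 2 * (theta b d 0 * theta b d 0 + 2 * theta a d 0 * theta b d 0 + phi a b c d 1
         - delta_scal a b c d * theta b d 0 - beta_scal a b c d).
Proof. by move=> two; rewrite /phi /theta /delta_scal /beta_scal /half_d; field. Qed.



Lemma trC (F : fieldType) n (X Y : 'M[F]_n) : X *m Y = Y *m X -> X^T *m Y^T = Y^T *m X^T.
Proof. by rewrite -!trmx_mul => ->. Qed.

Lemma th_rec (F : fieldType) (y : F) i :
  th (y - (i.+2)%:R) = 2 + 2 * th (y - (i.+1)%:R) - th (y - i%:R).
Proof. by rewrite -!natr1 /th; ring. Qed.

Lemma delta_central (F : fieldType) n (A B C D : 'M[F]_n) : (2 : F) != 0 ->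
  comm A B = D *+ 2 -> comm B C = D *+ 2 -> comm C A = D *+ 2 ->
  [/\ (A + B + C) *m A = A *m (A + B + C), (A + B + C) *m B = B *m (A + B + C),
      (A + B + C) *m C = C *m (A + B + C) & (A + B + C) *m D = D *m (A + B + C)].
Proof.
rewrite /comm => two eAB eBC eCA.
have hA : (A + B + C) *m A = A *m (A + B + C).
  rewrite !mulmxDl !mulmxDr; move: eAB eCA.
  move: (A *m A) (A *m B) (B *m A) (C *m A) (A *m C) => X1 X2 X3 X4 X5 h1 h2.
  apply/matrixP => i j; move: (congr1 (fun M : 'M_n => M i j) h1) (congr1 (fun M : 'M_n => M i j) h2).
  rewrite !mxE ?mulmxnE => {}h1 {}h2.
  apply: (lin_comb3 h1 h2 (erefl (0:F)) (k1 := -1) (k2 := 1) (k3 := 0)); ring.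
have hB : (A + B + C) *m B = B *m (A + B + C).
  rewrite !mulmxDl !mulmxDr; move: eAB eBC.
  move: (B *m B) (A *m B) (B *m A) (C *m B) (B *m C) => X1 X2 X3 X4 X5 h1 h2.
  apply/matrixP => i j; move: (congr1 (fun M : 'M_n => M i j) h1) (congr1 (fun M : 'M_n => M i j) h2).
  rewrite !mxE ?mulmxnE => {}h1 {}h2.
  apply: (lin_comb3 h1 h2 (erefl (0:F)) (k1 := 1) (k2 := -1) (k3 := 0)); ring.
have hC : (A + B + C) *m C = C *m (A + B + C).
  rewrite !mulmxDl !mulmxDr; move: eCA eBC.
  move: (C *m C) (A *m C) (C *m A) (B *m C) (C *m B) => X1 X2 X3 X4 X5 h1 h2.
  apply/matrixP => i j; move: (congr1 (fun M : 'M_n => M i j) h1) (congr1 (fun M : 'M_n => M i j) h2).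
  rewrite !mxE ?mulmxnE => {}h1 {}h2.
  apply: (lin_comb3 h1 h2 (erefl (0:F)) (k1 := -1) (k2 := 1) (k3 := 0)); ring.
split => //.
set M := A + B + C in hA hB hC *.
have : M *m (A *m B - B *m A) = (A *m B - B *m A) *m M.
  have e1 : M *m (A *m B) = A *m B *m M by rewrite mulmxA hA -mulmxA hB mulmxA.
  have e2 : M *m (B *m A) = B *m A *m M by rewrite mulmxA hB -mulmxA hA mulmxA.
  by rewrite mulmxBr mulmxBl e1 e2.
rewrite eAB -!scaler_nat -scalemxAl -scalemxAr.
by move/(scalerI two).
Qed.

Unset Implicit Arguments.
Set Strict Implicit.

Theorem theorem6p3 (F : closedFieldType) (charF0 : [pchar F] =i pred0)
  (d : nat) (V : racah_rep F d.+1) :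
  is_racah_module V -> racah_irreducible V ->
  exists a b c : F, exists2 W : racah_rep F d.+1, is_Rd d a b c W & racah_iso W V.
Proof.
move=> HV [_ Hirr].
have HV' := HV.
case: HV' => [[eAB eBC eCA] [cal cbe cga]].
set n := d.+1.
have n0 : (0 < n)%N by [].
have two : (2 : F) != 0 by rewrite ((pcharf0P F).1 charF0 2).
set A := rA V; set B := rB V; set C := rC V; set D := rD V.
set a := A^T; set b := B^T; set c := C^T; set dd := D^T.
have Hirr4 : forall S : 'M[F]_n, (S *m a <= S)%MS -> (S *m b <= S)%MS ->
    (S *m c <= S)%MS -> (S *m dd <= S)%MS -> \rank S = 0%N \/ \rank S = n.
  move=> S h1 h2 h3 h4; rewrite -mxrank_tr; apply: Hirr.
  by rewrite !trmx_mul !trmxK.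
have sch (M : 'M[F]_n) : commutes_gens V M -> exists l, M = l%:M.
  case=> h1 h2 h3 h4.
  have [l hl] := schur n0 Hirr4 (trC h1) (trC h2) (trC h3) (trC h4).
  by exists l; rewrite -[M]trmxK hl tr_scalar_mx.
have [al hal] := sch _ cal.
have [be hbe] := sch _ cbe.
have [hdA hdB hdC hdD] := delta_central two eAB eBC eCA.
have [de hde] : exists l, rdelta V = l%:M by apply: sch; split.
have hc1 : b *m a - a *m b = dd *+ 2.
  by have := congr1 trmx eAB; rewrite /comm raddfB /= !trmx_mul raddfMn.
have hal' : dd *m a - a *m dd + c *m a - a *m b = al%:M.
  by have := congr1 trmx hal; rewrite /ralpha /comm !raddfD !raddfN /= !trmx_mul tr_scalar_mx.
have hbe' : dd *m b - b *m dd + a *m b - b *m c = be%:M.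
  by have := congr1 trmx hbe; rewrite /rbeta /comm !raddfD !raddfN /= !trmx_mul tr_scalar_mx.
have hde' : a + b + c = de%:M.
  by have := congr1 trmx hde; rewrite /rdelta !raddfD /= tr_scalar_mx.
have Ha := rowR1 hc1 hal' hde'.
have Hb := rowR2 hc1 hbe' hde'.
have ec : c = de%:M - a - b.
  apply/matrixP => i j; have := congr1 (fun M : 'M_n => M i j) hde'; rewrite !mxE => h.
  by rewrite -h; ring.
have edd : dd = 2^-1 *: (b *m a - a *m b).
  by rewrite hc1 -scaler_nat scalerA mulVf // scale1r.
have Hirr2 : forall S : 'M[F]_n, (S *m a <= S)%MS -> (S *m b <= S)%MS ->
    \rank S = 0%N \/ \rank S = n.
  move=> S h1 h2; apply: Hirr4 => //.
    rewrite ec !mulmxBr mul_mx_scalar; apply: addmx_sub; first apply: addmx_sub.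
    - exact: scalemx_sub (submx_refl S).
    - by rewrite -scaleN1r; apply: scalemx_sub.
    - by rewrite -scaleN1r; apply: scalemx_sub.
  rewrite edd -scalemxAr; apply: scalemx_sub; rewrite mulmxBr !mulmxA; apply: addmx_sub.
    exact: submx_trans (submxMr a h2) h1.
  by rewrite -scaleN1r; apply: scalemx_sub; exact: submx_trans (submxMr b h1) h2.
have Hirr2' : forall S : 'M[F]_n, (S *m b <= S)%MS -> (S *m a <= S)%MS ->
    \rank S = 0%N \/ \rank S = n by move=> S h1 h2; apply: Hirr2.
have [yA [u0 u0nz [eu0 neA]]] := extremal charF0 a n0.
set tauU := fun j : nat => th (yA - j%:R).
set kapU := fun _ : nat => (0 : F).
have HtauU : forall i, tauU i.+2 = 2 + 2 * tauU i.+1 - tauU i by move=> i; exact: th_rec.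
have H0u : u0 *m a = tauU 0%N *: u0 by rewrite eu0 /tauU subr0.
have H1u : exists cc, kv b kapU u0 1 *m a - tauU 1%N *: kv b kapU u0 1 = cc *: u0.
  have [cc hcc] := lowest Ha 0 u0nz eu0 neA.
  by exists cc; rewrite -hcc.
have lowU := Sp_lower Hb HtauU H0u H1u.
have fullU := Sp_full Hb HtauU H0u H1u Hirr2' u0nz.
have [y [v0 v0nz [ev0 neB]]] := extremal charF0 b n0.
set x := d%:R - 1 - yA.
set kapV := fun j : nat => th (x - j%:R).
set tauV := fun j : nat => th (y - j%:R).
have HtauV : forall i, tauV i.+2 = 2 + 2 * tauV i.+1 - tauV i by move=> i; exact: th_rec.
have H0v : v0 *m b = tauV 0%N *: v0 by rewrite ev0 /tauV subr0.
have H1v : exists cc, kv a kapV v0 1 *m b - tauV 1%N *: kv a kapV v0 1 = cc *: v0.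
  have [cc hcc] := lowest Hb (kapV 0) v0nz ev0 neB.
  by exists cc; rewrite -hcc.
have HkV : forall k, (k <= d)%N -> kapV k = tauU (d - k)%N.
  by move=> k hk; rewrite /kapV /tauU /x natrB // /th; ring.
have vin : forall k, (k <= n)%N -> (kv a kapV v0 k <= Sp b kapU u0 (n - k))%MS.
  elim=> [_|k IH hk]; first by rewrite subn0; exact: fullU.
  have -> : kv a kapV v0 k.+1 = kv a kapV v0 k *m (a - (tauU (d - k)%N)%:M).
    by rewrite /= mulmxBr mul_mx_scalar HkV.
  have -> : (n - k.+1 = d - k)%N by lia.
  apply: lowU; first lia.
  have -> : (d - k).+1 = (n - k)%N by lia.
  exact: IH (ltnW hk).
have vn0 : kv a kapV v0 n = 0.
  by apply/eqP; rewrite -submx0; have := vin n (leqnn _); rewrite subnn Sp0.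
have notinV := notin Ha HtauV H0v H1v Hirr2 v0nz.
set w0 := kv a kapV v0 d.
have w0nz : w0 != 0.
  apply/negP => /eqP w00; move: (notinV d (ltnSn d)); rewrite -/w0 w00 sub0mx.
  by [].
have H0w : w0 *m a = tauU 0%N *: w0.
  move: vn0 => /= /eqP; rewrite -/w0 subr_eq0 => /eqP ->.
  by rewrite HkV // subnn.
have ew0 : w0 *m a = th yA *: w0 by rewrite H0w /tauU subr0.
set kapW := fun j : nat => th (y - d%:R + j%:R).
have H1w : exists cc, kv b kapW w0 1 *m a - tauU 1%N *: kv b kapW w0 1 = cc *: w0.
  have [cc hcc] := lowest Ha (kapW 0) w0nz ew0 neA.
  by exists cc; rewrite -hcc.
have HkW : forall k, (k <= d)%N -> kapW k = tauV (d - k)%N.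
  by move=> k hk; rewrite /kapW /tauV natrB //; congr th; ring.
have wv := wv Ha Hb HtauV HtauU H0v H1v H0w H1w Hirr2 w0nz HkW HkV.
set v := kv a kapV v0.
have hphi : forall i : 'I_n, exists ph : F,
    ((i : nat) = 0%N -> ph = 0) /\ v i *m b = tauV i *: v i + ph *: v (i.-1).
  case=> [[|i] hi].
    by exists 0; split => //; rewrite scale0r addr0 /= H0v.
  rewrite -[nat_of_ord (Ordinal hi)]/(i.+1) -[i.+1.-1]/i.
  have [l1 l1nz e1] := wv i.+1 hi.
  have [l0 l0nz e0] := wv i (ltnW hi).
  exists (l0 / l1); split => //.
  have ew : kv b kapW w0 (d - i.+1) *m b
      = tauV i.+1 *: kv b kapW w0 (d - i.+1) + kv b kapW w0 (d - i).
    rewrite kvS HkW; last lia.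
    have -> : (d - (d - i.+1) = i.+1)%N by lia.
    by have -> : (d - i.+1).+1 = (d - i)%N by lia.
  move: ew; rewrite e1 e0 -scalemxAl => ew.
  apply: (scalerI l1nz); rewrite /v ew; apply/rowP => j; rewrite !mxE.
  by field.
have [phf hphf] := fin_all_exists hphi.
set ph := fun k : nat => if (0 < k < n)%N then phf (inord k) else 0.
have ph0 : ph 0%N = 0 by [].
have phn : ph n = 0 by rewrite /ph ltnn andbF.
have vB : forall i, (i < n)%N -> v i *m b = tauV i *: v i + ph i *: v (i.-1).
  move=> i hi; have [hz ->] := hphf (Ordinal hi).
  rewrite /ph /= hi andbT; case: i hi hz => [|i] hi hz /=; first by rewrite hz.
  by congr (_ + _ *: _); congr phf; apply: val_inj; rewrite /= inordK.
set Q := Sp a kapV v0 n.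
have Qu : Q \in unitmx.
  by rewrite -row_full_unit /row_full (rank_Sp_eq Ha HtauV H0v H1v Hirr2 v0nz (leqnn n)).
have rowQ : forall i : 'I_n, row i Q = v i by move=> i; rewrite row_Sp ltn_ord.
have evQ : forall k, (k <= n)%N -> ev F d k *m Q = v k.
  move=> k; rewrite leq_eqVlt => /orP[/eqP ->|hk]; first by rewrite ev_ge // mul0mx /v vn0.
  by rewrite (ev_row hk) rowQ.
have rowev : forall (i : 'I_n) (M : 'M[F]_n), row i M = ev F d i *m M.
  by move=> i M; rewrite (ev_row (ltn_ord i)); congr row; apply: val_inj.
have QA : Q *m a = (Amat d kapV)^T *m Q.
  apply/row_matrixP => i; rewrite row_mul rowQ row_mul rowev evA mulmxDl -scalemxAl.
  rewrite !evQ ?ltn_ord //; last exact: ltnW (ltn_ord i).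
  exact: kvS.
have QB : Q *m b = (Bmat d tauV ph)^T *m Q.
  apply/row_matrixP => i; rewrite row_mul rowQ row_mul rowev (evB _ _ ph0 phn) mulmxDl -!scalemxAl.
  rewrite !evQ; first exact: vB.
    by apply: leq_trans (leq_pred _) (ltnW (ltn_ord i)).
  exact: ltnW.
set wa := (Amat d kapV)^T.
set wb := (Bmat d tauV ph)^T.
set P1 := invmx Q.
have P1u : P1 \in unitmx by rewrite unitmx_inv.
have cja : cj P1 a = wa by rewrite /cj invmxK QA mulmxK.
have cjb : cj P1 b = wb by rewrite /cj invmxK QB mulmxK.
have HaW : wa *m wa *m wb - 2 *: (wa *m wb *m wa) + wb *m wa *m wa
    = 2 *: (wa *m wa + wa *m wb + wb *m wa - de *: wa + al%:M).
  have := congr1 (cj P1) Ha.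
  by rewrite !(cjD, cjN, cjZ, cjM P1u, cj_scalar P1u) cja cjb.
have HbW : wb *m wb *m wa - 2 *: (wb *m wa *m wb) + wa *m wb *m wb
    = 2 *: (wb *m wb + wb *m wa + wa *m wb - de *: wb + (- be)%:M).
  have := congr1 (cj P1) Hb.
  by rewrite !(cjD, cjN, cjZ, cjM P1u, cj_scalar P1u) cja cjb.
have eK k : ev F d k *m wa = kapV k *: ev F d k + ev F d k.+1 by exact: evA.
have eT k : ev F d k *m wb = tauV k *: ev F d k + ph k *: ev F d k.-1 by exact: evB.
have hrec : forall i, (i < d)%N -> ph i - 2 * ph i.+1 + ph i.+2
    = 2 * (kapV i + kapV i.+1 + tauV i + tauV i.+1 - de)
      + (kapV i - kapV i.+1) * (tauV i - tauV i.+1).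
  move=> i hi.
  have hj : (i.+1 < n)%N by lia.
  have e6 : (ph i *: ev F d i.-1) *m wa = kapV i.-1 *: (ph i *: ev F d i.-1) + ph i *: ev F d i.
    case: i hi hj => [|i] hi hj; first by rewrite ph0 !scale0r mul0mx scaler0 add0r.
    by rewrite -scalemxAl eK scalerDr !scalerA mulrC.
  have := coef_R1 (j := Ordinal hj) HaW (eK i) (eK i.+1) (eT i) (eT i.+1) (eT i.+2) e6
    (erefl _) (erefl _) (erefl _) (erefl _).
  rewrite !mxE /= !eqxx.
  have -> : (i.+1 == i)%N = false by rewrite gtn_eqF.
  have -> : (i.+1 == i.+2)%N = false by rewrite ltn_eqF.
  have -> : (i.+1 == i.-1)%N = false by case: i {hi hj e6} => // i; rewrite gtn_eqF // ltnW.
  have f0 : (false%:R : F) = 0 by []. have t1 : (true%:R : F) = 1 by [].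
  rewrite f0 t1 => H; apply: (eq_diff H); ring.
set a' := x - half_d F d.
set b' := y - half_d F d.
set K0 := de - (half_d F d * (half_d F d + 1) + a' * (a' + 1) + b' * (b' + 1)).
have [c' hc'] : exists c', root ('X^2 + 'X - K0%:P) c'.
  apply/closed_rootP; rewrite size_polyDl ?size_polyDl ?size_polyXn ?size_polyX //.
  by rewrite size_polyN size_polyC; case: (K0 == 0).
have ec' : c' * (c' + 1) = K0.
  by move: hc'; rewrite /root !hornerE => /eqP h; apply/eqP; rewrite -subr_eq0 -h; apply/eqP; ring.
have hdel : de = delta_scal a' b' c' d.
  by rewrite /delta_scal ec' /K0; ring.
have kapE : forall k, kapV k = theta a' d k by move=> k; rewrite /kapV /theta /th /a'; ring.
have tauE : forall k, tauV k = theta b' d k by move=> k; rewrite /tauV /theta /th /b'; ring.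
have phE : forall k, (k <= n)%N -> ph k = phi a' b' c' d k.
  move=> k hk; apply/eqP; rewrite -subr_eq0; apply/eqP.
  apply: (@seq_uniq F (fun k => ph k - phi a' b' c' d k) d charF0) => //.
  - by rewrite ph0 /phi mul0r !mul0r subr0.
  - by rewrite phn /phi -natr1; apply/eqP; rewrite subr_eq0; apply/eqP; ring.
  - move=> i hi; have := hrec i hi; have := phi_band a' b' c' d i two.
    rewrite -!kapE -!tauE -hdel => e1 e2.
    by apply: (lin_comb3 e2 e1 (erefl (0:F)) (k1 := 1) (k2 := -1) (k3 := 0)); ring.
have ph1E : ph 1%N = phi a' b' c' d 1 by apply: phE.
have f0 : (false%:R : F) = 0 by []. have t1 : (true%:R : F) = 1 by [].
have alE : al = alpha_scal a' b' c' d.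
  have e6 : (ph 0%N *: ev F d 0%N.-1) *m wa = kapV 0%N.-1 *: (ph 0%N *: ev F d 0%N.-1) + ph 0%N *: ev F d 0%N.
    by rewrite ph0 !scale0r mul0mx scaler0 add0r.
  have := coef_R1 (j := Ordinal n0) HaW (eK 0%N) (eK 1%N) (eT 0%N) (eT 1%N) (eT 2%N) e6
    (erefl _) (erefl _) (erefl _) (erefl _).
  rewrite !mxE /= f0 t1 ph0 ph1E !kapE !tauE hdel => H.
  have := phi_alpha a' b' c' d two => H2.
  apply: (mulfI two).
  by apply: (lin_comb3 H H2 (erefl (0:F)) (k1 := -1) (k2 := 1) (k3 := 0)); ring.
have beE : be = beta_scal a' b' c' d.
  have eT0 : ev F d 0%N *m wb = tauV 0%N *: ev F d 0%N by rewrite eT ph0 scale0r addr0.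
  have := coef_R2 (j := Ordinal n0) HbW eT0 (eK 0%N) (eT 1%N) (erefl _) (erefl _).
  rewrite !mxE /= f0 t1 ph1E !kapE !tauE hdel => H.
  have := phi_beta a' b' c' d two => H2.
  apply: (mulfI two).
  by apply: (lin_comb3 H H2 (erefl (0:F)) (k1 := 1) (k2 := -1) (k3 := 0)); ring.
have AmatE : Amat d kapV = RdA a' d.
  by apply/matrixP => i j; rewrite !mxE kapE.
have BmatE : Bmat d tauV ph = RdB a' b' c' d.
  apply/matrixP => i j; rewrite !mxE tauE; case: ifP => // _; case: ifP => // _.
  by apply: phE; apply: ltnW.
set P := Q^T.
have Pu : P \in unitmx by rewrite unitmx_tr.
have cjA : cj P A = RdA a' d.
  have : A *m P = P *m Amat d kapV.
    by rewrite /P -[A]trmxK -trmx_mul -/a QA trmx_mul trmxK.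
  by rewrite /cj -mulmxA => ->; rewrite mulmxA mulVmx // mul1mx AmatE.
have cjB : cj P B = RdB a' b' c' d.
  have : B *m P = P *m Bmat d tauV ph.
    by rewrite /P -[B]trmxK -trmx_mul -/b QB trmx_mul trmxK.
  by rewrite /cj -mulmxA => ->; rewrite mulmxA mulVmx // mul1mx BmatE.
exists a', b', c', (cjrep P V); last exact: cj_iso.
split; first by split; [exact: cj_module | exact: cjA | exact: cjB].
split.
- by rewrite (cj_alpha Pu) hal (cj_scalar Pu) alE.
- by rewrite (cj_beta Pu) hbe (cj_scalar Pu) beE.
- by rewrite cj_delta hde (cj_scalar Pu) hdel.
Qed.
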